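(* Fix $n$ and let $\mathbb{A}$ be the set of adjacency matrices $A_\mathcal{D}$ of DAGs $\mathcal{D}$ on node set $[n]$ such that $i\to j\in E^\mathcal{D}$ implies $i<j$ (equivalently, $A_\mathcal{D}$ is strictly upper triangular). For $A_\mathcal{D}\in\mathbb{A}$ let $T=\sum_{p=0}^{n-1}A_\mathcal{D}^p$ and $U_\mathcal{D}=T^\top T$, and let $\mathbb{Y}=\{U_\mathcal{D}:A_\mathcal{D}\in\mathbb{A}\}$. Then the map $f:\mathbb{A}\to\mathbb{Y}$, $f(A_\mathcal{D})=U_\mathcal{D}$, is a bijection, and $a(U_\mathcal{D})$ is the adjacency matrix of the unconditional dependence graph $\mathcal{U}^\mathcal{D}$.
   Context: The adjacency matrix of a DAG on $[n]$ has $(i,j)$ entry $1$ iff $i\to j$ is an edge, else $0$. For a symmetric matrix $M$, $a(M)$ is the $0/1$ matrix with $a(M)_{v,w}=1$ iff $v\neq w$ and $M_{v,w}\neq0$. A trek in a DAG is a path (no repeated vertices) containing no collider (no node whose two incident path edges both point into it). The unconditional dependence graph $\mathcal{U}^\mathcal{D}$ is the undirected graph on the node set of $\mathcal{D}$ in which distinct $v,w$ are adjacent iff there is a trek between them in $\mathcal{D}$. *)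

(* Defs.v *)
From mathcomp Require Import all_boot all_order all_algebra.
Set Implicit Arguments. Unset Strict Implicit. Unset Printing Implicit Defensive.
Import GRing.Theory Num.Theory.
Local Open Scope ring_scope.

(* A DAG on [n] = {0,..,n-1} (as 'I_n) is given by its 0/1 adjacency matrix
   A with A i j = 1 iff i -> j is an edge. *)

Definition adjA (n : nat) (A : 'M[int]_n) : Prop :=
  forall i j : 'I_n, (A i j = 0 \/ A i j = 1) /\ (A i j != 0 -> (i < j)%N).

Definition Tmat (n : nat) (A : 'M[int]_n) : 'M[int]_n := \sum_(p < n) A ^+ p.
Definition Umat (n : nat) (A : 'M[int]_n) : 'M[int]_n := (Tmat A)^T *m Tmat A.

Definition amat (n : nat) (M : 'M[int]_n) : 'M[int]_n :=
  \matrix_(v, w) (if (v != w) && (M v w != 0) then 1 else 0).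

Definition edge (n : nat) (A : 'M[int]_n) (i j : 'I_n) : bool := A i j != 0.
Definition sadj (n : nat) (A : 'M[int]_n) (i j : 'I_n) : bool :=
  edge A i j || edge A j i.

(* x :: q is a path (no repeated vertices, consecutive vertices adjacent)
   without colliders: no interior node k with p_{k-1} -> p_k <- p_{k+1}. *)
Definition is_trek_path (n : nat) (A : 'M[int]_n) (x : 'I_n) (q : seq 'I_n) : Prop :=
  let p := x :: q in
  uniq p /\ path (sadj A) x q /\
  (forall k : nat, (0 < k)%N -> (k.+1 < size p)%N ->
     ~~ (edge A (nth x p k.-1) (nth x p k) && edge A (nth x p k.+1) (nth x p k))).

Definition trek (n : nat) (A : 'M[int]_n) (v w : 'I_n) : Prop :=
  exists q : seq 'I_n, is_trek_path A v q /\ last v q = w.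

Definition udg (n : nat) (A : 'M[int]_n) (v w : 'I_n) : Prop :=
  v <> w /\ trek A v w.

Definition is_adj_matrix (n : nat) (M : 'M[int]_n) (G : 'I_n -> 'I_n -> Prop) : Prop :=
  forall v w : 'I_n, (G v w -> M v w = 1) /\ (~ G v w -> M v w = 0).

(* Main.v *)
Require Import Defs.
From mathcomp Require Import all_boot all_order all_algebra zify.
Set Implicit Arguments. Unset Strict Implicit. Unset Printing Implicit Defensive.
Import GRing.Theory Num.Theory.
Local Open Scope ring_scope.

Section Aux.
Variable n : nat.
Variable A : 'M[int]_n.
Hypothesis hA : adjA A.

Definition bpath (v : 'I_n) (r : seq 'I_n) := path (fun a b => edge A b a) v r.
Definition anc (k v : 'I_n) := exists r, bpath v r /\ last v r = k.

Lemma edge_lt i j : edge A i j -> (i < j)%N.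
Proof. by move=> h; have [_ ] := hA i j; apply. Qed.

Lemma edge1 i j : edge A i j -> A i j = 1.
Proof. rewrite /edge => h; have [[e|e] _] := hA i j => //; by rewrite e eqxx in h. Qed.

Lemma A_ge0 i j : 0 <= A i j.
Proof. by have [[->|->] _] := hA i j. Qed.

Lemma edge_asym i j : edge A i j -> ~~ edge A j i.
Proof.
move=> /edge_lt h; apply/negP => /edge_lt h'.
by have := ltn_trans h h'; rewrite ltnn.
Qed.

Lemma pow_ge0 p i j : 0 <= (A ^+ p) i j.
Proof.
elim: p i j => [|p IH] i j; first by rewrite expr0 mxE ler0n.
rewrite exprSr -mulmxE mxE; apply: sumr_ge0 => k _.
by apply: mulr_ge0; [apply: IH | apply: A_ge0].
Qed.

Lemma pow_entry p i j : (A ^+ p) i j != 0 ->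
  exists r, size r = p /\ bpath j r /\ last j r = i.
Proof.
elim: p i j => [|p IH] i j.
  rewrite expr0 mxE; case: (eqVneq i j) => [-> _|ne]; [by exists [::] | by []].
rewrite exprSr -mulmxE mxE => h.
have [m hm] : exists m, (A ^+ p) i m * A m j != 0.
  apply/existsP; apply: contraR h => /existsPn hn.
  by apply/eqP; apply: big1 => m _; apply/eqP; move: (hn m); rewrite negbK.
rewrite mulf_eq0 negb_or in hm; case/andP: hm => h1 h2.
have [r [sr [br lr]]] := IH _ _ h1.
exists (m :: r); split; first by rewrite /= sr.
by split => //; apply/andP; split.
Qed.

Lemma bpath_bound j r : bpath j r -> (last j r + size r <= j)%N.
Proof.
elim: r j => [|m r IH] j /=; first by rewrite addn0.
case/andP => /edge_lt h1 /IH h2.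
by rewrite addnS; apply: leq_ltn_trans h2 h1.
Qed.

Lemma entry_pow j r : bpath j r -> (A ^+ size r) (last j r) j != 0.
Proof.
elim: r j => [|m r IH] j /=; first by rewrite expr0 mxE eqxx oner_eq0.
case/andP => h1 /IH h2.
rewrite exprSr -mulmxE mxE; apply/eqP => h0.
have := psumr_eq0P (fun k _ => mulr_ge0 (pow_ge0 _ _ _) (A_ge0 _ _)) h0 (i:=m) isT.
by rewrite (edge1 h1) mulr1 => /eqP; rewrite (negbTE h2).
Qed.

Lemma nilp : A ^+ n = 0.
Proof.
apply/matrixP => i j; rewrite [RHS]mxE; apply/eqP; apply: contraT => h.
have [r [sr [br lr]]] := pow_entry h.
have := bpath_bound br; rewrite lr sr => hb.
by have := ltn_ord j; lia.
Qed.

Lemma T_inv : Tmat A *m (1 - A) = 1.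
Proof.
rewrite mulmxE /Tmat mulr_suml.
under eq_bigr do rewrite mulrBr mulr1 -exprSr -opprB.
rewrite sumrN -(big_mkord xpredT (fun p => A ^+ p.+1 - A ^+ p)).
by rewrite telescope_sumr // nilp expr0 sub0r opprK.
Qed.

Lemma T_ge0 (i j : 'I_n) : 0 <= Tmat A i j.
Proof. by rewrite /Tmat summxE; apply: sumr_ge0 => p _; apply: pow_ge0. Qed.

Lemma T_upper (i j : 'I_n) : (j < i)%N -> Tmat A i j = 0.
Proof.
move=> lji; rewrite /Tmat summxE; apply: big1 => p _; apply/eqP; apply: contraT => h.
have [r [sr [br lr]]] := pow_entry h.
by have := bpath_bound br; rewrite lr sr; lia.
Qed.

Lemma Tneq0 (k v : 'I_n) : Tmat A k v != 0 <-> anc k v.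
Proof.
split.
  rewrite /Tmat summxE => h.
  have [p hp] : exists p : 'I_n, (A ^+ p) k v != 0.
    apply/existsP; apply: contraR h => /existsPn hn.
    by apply/eqP; apply: big1 => m _; apply/eqP; move: (hn m); rewrite negbK.
  have [r [_ [br lr]]] := pow_entry hp; by exists r.
case=> r [br lr]; rewrite /Tmat summxE; apply/eqP => h0.
have hs : (size r < n)%N by have := bpath_bound br; have := ltn_ord v; lia.
have := psumr_eq0P (fun k _ => pow_ge0 _ _ _) h0 (i:=Ordinal hs) isT => /=.
by move/eqP; rewrite -lr (negbTE (entry_pow br)).
Qed.

End Aux.


Definition upper n (M : 'M[int]_n) := forall i j : 'I_n, (j < i)%N -> M i j = 0.

Lemma upper_mul n (X Y : 'M[int]_n) : upper X -> upper Y -> upper (X *m Y).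
Proof.
move=> uX uY i j lji; rewrite mxE; apply: big1 => k _.
case: (ltnP k i) => h; first by rewrite uX ?mul0r.
by rewrite uY ?mulr0 //; apply: leq_trans lji h.
Qed.

Lemma diag_mul n (X Y : 'M[int]_n) : upper X -> upper Y ->
  forall i, (X *m Y) i i = X i i * Y i i.
Proof.
move=> uX uY i; rewrite mxE (bigD1 i) //= big1 ?addr0 // => k nki.
case: (ltngtP k i) => h; first by rewrite uX ?mul0r.
  by rewrite uY ?mulr0.
by move: nki; rewrite (val_inj h) eqxx.
Qed.

Lemma upper_1mA n (A : 'M[int]_n) : adjA A -> upper (1 - A).
Proof.
move=> hA i j lji; rewrite !mxE.
have -> : (i == j) = false by apply/negP => /eqP e; move: lji; rewrite e ltnn.
have [_ h] := hA i j.
have -> : A i j = 0 by apply/eqP; apply: contraT => /h; lia.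
by rewrite subr0.
Qed.

Lemma diag_1mA n (A : 'M[int]_n) : adjA A -> forall i, (1 - A) i i = 1.
Proof.
move=> hA i; rewrite !mxE eqxx.
have [_ h] := hA i i.
have -> : A i i = 0 by apply/eqP; apply: contraT => /h; lia.
by rewrite subr0.
Qed.

Lemma diag_T n (A : 'M[int]_n) : adjA A -> forall i, Tmat A i i = 1.
Proof.
move=> hA i.
have := congr1 (fun M : 'M[int]_n => M i i) (T_inv hA) => /=.
by rewrite diag_mul ?diag_1mA ?mulr1 ?mxE ?eqxx //; [apply: T_upper | apply: upper_1mA].
Qed.

Lemma inj_part n (A B : 'M[int]_n) : adjA A -> adjA B -> Umat A = Umat B -> A = B.
Proof.
move=> hA hB hU.
have eA := T_inv hA; have eB := T_inv hB.
have hQ : Tmat B *m (1 - A) = (Tmat A *m (1 - B))^T.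
  have := congr1 (fun M => (1 - B)^T *m M *m (1 - A)) hU => /=.
  rewrite /Umat -!mulmxA eA mulmx1 mulmxA -trmx_mul => ->.
  by rewrite mulmxA -trmx_mul eB trmx1 mul1mx.
have uTB : upper (Tmat B) by move=> i j; apply: T_upper.
have uTA : upper (Tmat A) by move=> i j; apply: T_upper.
have hQ1 : Tmat B *m (1 - A) = 1.
  apply/matrixP => i j; rewrite [RHS]mxE.
  case: (ltngtP i j) => h.
  - rewrite hQ mxE upper_mul //; last by apply: upper_1mA.
    by have -> : (i == j) = false by apply/negP => /eqP e; move: h; rewrite e ltnn.
  - rewrite upper_mul //; last by apply: upper_1mA.
    by have -> : (i == j) = false by apply/negP => /eqP e; move: h; rewrite e ltnn.
  - rewrite (val_inj h) eqxx diag_mul ?(diag_T hB) ?(diag_1mA hA) ?mulr1 //; by apply: upper_1mA.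
have eB' := mulmx1C eB.
have : 1 - A = 1 - B.
  by rewrite -[1 - A]mul1mx -eB' -mulmxA hQ1 mulmx1.
by move/addrI/oppr_inj.
Qed.

Section Treks.
Variable n : nat.
Variable A : 'M[int]_n.
Hypothesis hA : adjA A.

Fixpoint nocoll (x : 'I_n) (q : seq 'I_n) : bool :=
  match q with
  | y :: q' => (match q' with z :: _ => ~~ (edge A x y && edge A z y) | [::] => true end)
               && nocoll y q'
  | [::] => true
  end.

Lemma nocollP d x q :
  (forall k : nat, (0 < k)%N -> (k.+1 < size (x :: q))%N ->
     ~~ (edge A (nth d (x :: q) k.-1) (nth d (x :: q) k) &&
         edge A (nth d (x :: q) k.+1) (nth d (x :: q) k))) <-> nocoll x q.
Proof.
elim: q x => [|y q IH] x.
  by split => // _ k k0 hk; exfalso; move: hk => /=; lia.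
case: q IH => [|z r] IH.
  by split => // _ k k0 hk; exfalso; move: hk k0 => /=; lia.
have -> : nocoll x [:: y, z & r] = ~~ (edge A x y && edge A z y) && nocoll y (z :: r) by [].
split.
  move=> H; apply/andP; split; first exact: (H 1%N).
  by apply/IH => -[|k] // _ hk; exact: (H k.+2 isT hk).
case/andP => h0 /IH H [|[|k]] // _ hk; exact: (H k.+1 isT hk).
Qed.

Lemma anc_refl x : anc A x x.
Proof. by exists [::]. Qed.

Lemma anc_step k y x : anc A k y -> edge A y x -> anc A k x.
Proof. by case=> r [br lr] e; exists (y :: r); split => //=; rewrite /bpath /= e. Qed.

Lemma anc_ext a b c : anc A a b -> edge A c a -> anc A c b.
Proof.
case=> r [br lr] e; exists (rcons r c); split; last by rewrite last_rcons.
by rewrite /bpath rcons_path; apply/andP; split => //=; rewrite lr.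
Qed.

Lemma nocoll_tail x y q : nocoll x (y :: q) -> nocoll y q.
Proof. by case/andP. Qed.

Lemma trek_anc x q : path (sadj A) x q -> nocoll x q ->
  exists k, anc A k x /\ anc A k (last x q) /\ (edge A x (head x q) -> k = x).
Proof.
elim: q x => [|y q IH] x /=.
  by move=> _ _; exists x; split; [apply: anc_refl | split; [apply: anc_refl|]].
case/andP => hs hp hn.
have [k [h1 [h2 h3]]] := IH y hp (nocoll_tail hn).
case: (boolP (edge A x y)) => exy.
  exists x; split; first exact: anc_refl; split => //.
  move: hp hn h2 h3; case: q {IH} => [|z r] /=.
    by move=> _ _ _ _; apply: anc_ext (anc_refl y) exy.
  case/andP => syz _; case/andP => hc _ h2 h3.
  have eyz : edge A y z.
    move: syz; rewrite /sadj; case/orP => // ezy.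
    by move: hc; rewrite exy ezy.
  by rewrite -(h3 eyz) in exy; apply: anc_ext h2 exy.
exists k; split.
  apply: anc_step h1 _; move: hs; rewrite /sadj (negbTE exy) //.
by split => // e; rewrite e in exy.
Qed.

Definition G x s := [&& uniq (x :: s), path (sadj A) x s & nocoll x s].

Lemma ltn_trans' : transitive (fun a b : 'I_n => (a < b)%N).
Proof. by move=> b a c h1 h2; apply: ltn_trans h1 h2. Qed.
Lemma gtn_trans' : transitive (fun a b : 'I_n => (b < a)%N).
Proof. by move=> b a c h1 h2; apply: ltn_trans h2 h1. Qed.

Lemma fwd_ltn k q : path (edge A) k q -> path (fun a b : 'I_n => (a < b)%N) k q.
Proof. by apply: sub_path => a b; apply: edge_lt. Qed.

Lemma fwd_G k q : path (edge A) k q -> G k q.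
Proof.
move=> hp; apply/and3P; split.
- apply: (sorted_uniq ltn_trans') => [a|]; first by rewrite /= ltnn.
  exact: fwd_ltn.
- by apply: sub_path hp => a b h; rewrite /sadj h.
elim: q k hp => [|y q IH] k //= /andP [eky hp].
rewrite IH // andbT; case: q hp {IH} => [|z r] //= /andP [eyz _].
by rewrite (negbTE (edge_asym hA eyz)) andbF.
Qed.

Lemma back_G k q r v : bpath A v r -> last v r = k -> uniq (v :: r ++ q) ->
  G k q -> G v (r ++ q).
Proof.
elim: r v => [|u r IH] v /=; first by move=> _ ->.
case/andP => euv br lr.
rewrite [uniq _]/= => /andP [nv hu] hG.
have := IH u br lr hu hG; rewrite /G => /and3P [_ hp hn].
apply/and3P; split.
- by rewrite /= nv.
- by rewrite /= hp /sadj euv orbT.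
rewrite /= hn andbT; case: (r ++ q) => // z s.
by rewrite (negbTE (edge_asym hA euv)).
Qed.

Lemma anc_mem_back v r z : bpath A v r -> z \in v :: r -> anc A z v.
Proof.
elim: r v => [|u r IH] v /=.
  by move=> _; rewrite inE => /eqP ->; apply: anc_refl.
case/andP => euv br; rewrite in_cons => /orP [/eqP ->|zr]; first exact: anc_refl.
exact: anc_step (IH u br zr) euv.
Qed.

Lemma anc_mem_fwd x q z : path (edge A) x q -> z \in x :: q -> anc A z (last x q).
Proof.
elim: q x z => [|y q IH] x z /=.
  by move=> _; rewrite inE => /eqP ->; apply: anc_refl.
case/andP => exy hp; rewrite in_cons => /orP [/eqP ->|zq]; last exact: (IH y z hp zq).
by apply: anc_ext exy; apply: (IH y y hp); rewrite inE eqxx.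
Qed.

Lemma last_rev_belast (x : 'I_n) p : last (last x p) (rev (belast x p)) = x.
Proof.
have : rev (x :: p) = last x p :: rev (belast x p) by rewrite lastI rev_rcons.
by rewrite rev_cons => /(congr1 (last x)); rewrite last_rcons /=.
Qed.

Lemma anc_trek v w : (exists k, anc A k v /\ anc A k w) -> trek A v w.
Proof.
case=> k0 [a0v a0w].
pose P := fun i => (Tmat A i v != 0) && (Tmat A i w != 0).
have P0 : P k0 by apply/andP; split; apply/(Tneq0 hA).
case: (arg_maxnP (fun i : 'I_n => nat_of_ord i) P0) => k hk hmax.
case/andP: hk => /(Tneq0 hA) [rv [bv lv]] /(Tneq0 hA) [rw [bw lw]].
pose q := rev (belast w rw).
have fq : path (edge A) k q by rewrite /q -lw rev_path.
have lq : last k q = w by rewrite /q -lw last_rev_belast.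
have Gk := fwd_G fq.
have hu : uniq (v :: rv ++ q).
  rewrite -cat_cons cat_uniq; apply/and3P; split.
  - apply: (sorted_uniq gtn_trans') => [a|]; first by rewrite /= ltnn.
    by apply: sub_path bv => a b; apply: edge_lt.
  - apply/hasPn => z zq; apply/negP => zv.
    have azw : anc A z w by rewrite -lq; apply: anc_mem_fwd fq _; rewrite inE zq orbT.
    have azv := anc_mem_back bv zv.
    have kz : (k < z)%N.
      by have /allP := order_path_min ltn_trans' (fwd_ltn fq); apply.
    have : P z by apply/andP; split; apply/(Tneq0 hA).
    by move/hmax => h; move: kz h; rewrite /geq /=; lia.
  - by move: Gk => /and3P [/andP [_ h] _ _].
have := back_G bv lv hu Gk; case/and3P => hu' hp hn.
exists (rv ++ q); split; last by rewrite last_cat lv lq.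
split => //; split => //.
by apply/(nocollP v).
Qed.

Lemma udgE v w : udg A v w <-> (v != w) && (Umat A v w != 0).
Proof.
split.
  case=> nvw [q [[hu [hp hn]] lq]].
  have [k [akv [akw _]]] := trek_anc hp (proj1 (nocollP v v q) hn).
  rewrite lq in akw.
  apply/andP; split; first by apply/eqP.
  move/(Tneq0 hA): akv => h1; move/(Tneq0 hA): akw => h2.
  rewrite /Umat mxE; apply/eqP => h0.
  have hF : forall j : 'I_n, true -> 0 <= (Tmat A)^T v j * Tmat A j w.
    by move=> j _; rewrite mxE; apply: mulr_ge0; apply: T_ge0.
  have := psumr_eq0P hF h0 (i:=k) isT.
  by rewrite mxE => /eqP; rewrite mulf_eq0 (negbTE h1) (negbTE h2).
case/andP => nvw hU; split; first by apply/eqP.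
have [k hk] : exists k, (Tmat A)^T v k * Tmat A k w != 0.
  apply/existsP; apply: contraR hU => /existsPn hn.
  rewrite /Umat mxE; apply/eqP; apply: big1 => m _; apply/eqP; move: (hn m); rewrite negbK.
  by [].
rewrite mxE mulf_eq0 negb_or in hk; case/andP: hk => h1 h2.
by apply: anc_trek; exists k; split; apply/(Tneq0 hA).
Qed.
End Treks.

Unset Implicit Arguments.

Theorem lemma2p4 (n : nat) :
  (* f : A |-> U_A is a bijection from \mathbb{A} onto \mathbb{Y} *)
  ((forall A B : 'M[int]_n, adjA A -> adjA B -> Umat A = Umat B -> A = B) /\
   (forall Y : 'M[int]_n, (exists A, adjA A /\ Umat A = Y) ->
      exists A, adjA A /\ Umat A = Y)) /\
  (* a(U_D) is the adjacency matrix of U^D *)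
  (forall A : 'M[int]_n, adjA A -> is_adj_matrix (amat (Umat A)) (udg A)).
Proof.
split; first by split; [exact: inj_part | by []].
move=> A hA v w; split.
  move=> h; rewrite /amat mxE.
  by have := proj1 (udgE hA v w) h => ->.
move=> h; rewrite /amat mxE; case: ifP => // hc; exfalso; apply: h.
exact: (proj2 (udgE hA v w) hc).
Qed.
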